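(* Let $N=(V,A)$ be a phylogenetic network on $X$. Then the following are equivalent: (i) $N$ is tree-based. (ii) $N$ has an antichain $S\subseteq V$ and a partition of $V$ into $|S|$ chains, each of which forms a directed path in $N$ ending at a leaf in $X$. (iii) For every $U\subseteq V$, there exists a set of vertex-disjoint directed paths in $N$, each ending at a leaf in $X$, such that each element of $U$ lies on exactly one of these paths. (iv) The vertex set $V$ can be partitioned into a set of vertex-disjoint directed paths of $N$, each of which ends at a leaf in $X$. (v) The bipartite graph $\mathcal{G}_N$ has a matching of size $|V|-|X|$.
   Context: $X$ is a nonempty finite set. A phylogenetic network on $X$ is a rooted acyclic digraph with no parallel arcs such that: the unique root has out-degree at least one; $X$ is exactly the set of vertices of out-degree zero (leaves), each of in-degree one; every other vertex either has in-degree one and out-degree at least two (a tree vertex) or in-degree at least two and out-degree one (a reticulation). If $|X|=1$, the network may also consist of the single vertex in $X$. A phylogenetic $X$-tree is a phylogenetic network on $X$ with no reticulations. Subdividing an arc $(u,v)$ replaces it by arcs $(u,w),(w,v)$ with $w$ new; a subdivision is the result of a sequence of arc subdivisions. A phylogenetic network $N$ on $X$ is tree-based if it can be obtained from some phylogenetic $X$-tree $T$ (a base tree) by first taking a subdivision of $T$ (the new vertices are attachment points) and then adding new arcs $(u,v)$ (linking arcs) where either $u$ and $v$ are both attachment points, or $u$ is a non-leaf vertex of $T$ and $v$ is an attachment point; equivalently, $N$ has a rooted spanning tree with the same root as $N$ all of whose leaves lie in $X$. An antichain is a set of vertices no two of which are joined by a directed path. For a digraph $D=(V,A)$, $\mathcal{G}_D$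 is the bipartite graph with vertex bipartition $\{V_1,V_2\}$, where $V_1$ and $V_2$ are two disjoint copies of $V$, having an edge between the copy of $u$ in $V_1$ and the copy of $v$ in $V_2$ for each arc $(u,v)\in A$. *)

(* Defs.v *)
From mathcomp Require Import all_boot.
Set Implicit Arguments. Unset Strict Implicit. Unset Printing Implicit Defensive.

Section Phylo.
Variable V : finType.

(* A digraph on vertex set V is an arc relation a : rel V (hence no parallel arcs). *)
Definition indeg (a : rel V) (v : V) : nat := #|[set u | a u v]|.
Definition outdeg (a : rel V) (v : V) : nat := #|[set w | a v w]|.

Definition acyclic (a : rel V) : Prop := forall u v, a u v -> ~~ connect a v u.

Definition phylo_network (a : rel V) (X : {set V}) : Prop :=
  X != set0 /\ acyclic a /\
  (
    (X = [set: V] /\ #|X| = 1)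
  \/
    (exists r : V,
      indeg a r = 0 /\ (forall v, v != r -> 0 < indeg a v) /\
      0 < outdeg a r /\
      (forall v, (outdeg a v == 0) = (v \in X)) /\
      (forall x, x \in X -> indeg a x = 1) /\
      (forall v, v != r -> v \notin X ->
         (indeg a v = 1 /\ 2 <= outdeg a v) \/ (2 <= indeg a v /\ outdeg a v = 1)))).

(* Tree-based: N has a rooted spanning tree with the same root as N all of whose
   leaves lie in X.  The spanning tree is given by a sub-relation t of a. *)
Definition tree_based (a : rel V) (X : {set V}) : Prop :=
  exists (r : V) (t : rel V),
    indeg a r = 0 /\
    (forall u v, t u v -> a u v) /\
    indeg t r = 0 /\ (forall v, v != r -> indeg t v = 1) /\
    (forall v, connect t r v) /\
    (forall v, outdeg t v = 0 -> v \in X).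

Definition leaf_path (a : rel V) (X : {set V}) (p : seq V) : bool :=
  match p with
  | [::] => false
  | x :: q => path a x q && (last x q \in X)
  end.

Definition antichain (a : rel V) (S : {set V}) : Prop :=
  forall u v, u \in S -> v \in S -> u != v -> ~~ connect a u v.

Definition cond_ii (a : rel V) (X : {set V}) : Prop :=
  exists (S : {set V}) (ps : seq (seq V)),
    antichain a S /\ size ps = #|S| /\
    all (leaf_path a X) ps /\ uniq (flatten ps) /\ (forall v, v \in flatten ps).

Definition cond_iii (a : rel V) (X : {set V}) : Prop :=
  forall U : {set V}, exists ps : seq (seq V),
    all (leaf_path a X) ps /\ uniq (flatten ps) /\
    (forall u, u \in U -> count (fun p => u \in p) ps = 1).

Definition cond_iv (a : rel V) (X : {set V}) : Prop :=
  exists ps : seq (seq V),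
    all (leaf_path a X) ps /\ uniq (flatten ps) /\ (forall v, v \in flatten ps).

(* (v): a matching of G_N: a set of edges of G_N (i.e. arcs (u,v) of N, joining the
   copy of u in V1 to the copy of v in V2) no two sharing an endpoint. *)
Definition matching_GN (a : rel V) (M : {set V * V}) : Prop :=
  (forall e, e \in M -> a e.1 e.2) /\
  (forall e f, e \in M -> f \in M -> e != f -> e.1 != f.1 /\ e.2 != f.2).

Definition cond_v (a : rel V) (X : {set V}) : Prop :=
  exists M : {set V * V}, matching_GN a M /\ #|M| = #|V| - #|X|.

End Phylo.

(* Main.v *)
Require Import Defs.
From mathcomp Require Import all_boot zify.
Set Implicit Arguments. Unset Strict Implicit. Unset Printing Implicit Defensive.

Section Main.
Variable V : finType.
Implicit Types (a : rel V) (X : {set V}) (M : {set V * V}) (ps : seq (seq V)).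

Lemma leaf_noout a X x y : phylo_network a X -> x \in X -> ~~ a x y.
Proof.
case=> _ [ac [[HX H1] | [r [_ [_ [_ [Hl _]]]]]]] xX.
- apply/negP => axy.
  have : #|[set: V]| <= 1 by rewrite -HX H1.
  move/card_le1_eqP => H; have exy : x = y by apply: H; rewrite inE.
  subst y; by move: (ac _ _ axy); rewrite connect0.
- have : outdeg a x == 0 by rewrite Hl.
  rewrite /outdeg cards_eq0 => /eqP H; apply/negP => axy.
  have : y \in [set w | a x w] by rewrite inE.
  by rewrite H inE.
Qed.

Lemma leaf_connect a X x y : phylo_network a X -> x \in X -> connect a x y -> x = y.
Proof.
move=> N xX /connectP [[|z p] //= + ->].
by case/andP => axz _; move: (leaf_noout z N xX); rewrite axz.
Qed.

Lemma count_in ps u : uniq (flatten ps) -> count (fun p => u \in p) ps = (u \in flatten ps).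
Proof.
elim: ps => [|p ps IH] //=; rewrite cat_uniq => /and3P [_ Hd Hu].
rewrite IH // mem_cat; case up: (u \in p) => //=.
case uf: (u \in flatten ps) => //; by move/hasPn: Hd => /(_ u uf); rewrite up.
Qed.

Lemma uniq_map_f (f : seq V -> V) ps : uniq (flatten ps) -> (forall p, p \in ps -> f p \in p) ->
  uniq (map f ps).
Proof.
elim: ps => [|p ps IH] //=; rewrite cat_uniq => /and3P [_ Hd Hu] Hf.
have -> : uniq (map f ps) by apply: IH => // q qin; apply: Hf; rewrite inE qin orbT.
rewrite andbT.
apply/mapP => [[q qin fq]].
have fqin : f q \in flatten ps.
  apply/flattenP; exists q => //; apply: Hf; by rewrite inE qin orbT.
move/hasPn: Hd => /(_ _ fqin) H.
by move: (Hf p (mem_head _ _)); rewrite fq (negbTE H).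
Qed.

Lemma path_succ a x p y : path a x p -> y \in x :: p -> y != last x p -> exists z, a y z.
Proof.
elim: p x => [|z p IH] x /=; first by rewrite inE => _ /eqP ->; rewrite eqxx.
case/andP => axz pz; rewrite inE => /orP [/eqP -> | yin] ne.
  by exists z.
exact: IH pz yin ne.
Qed.

Lemma iv_size a X ps (x0 : V) : phylo_network a X -> all (leaf_path a X) ps -> uniq (flatten ps) ->
  (forall v, v \in flatten ps) -> size ps = #|X|.
Proof.
move=> N Hall Hu Hc.
have Hne : forall p, p \in ps -> last x0 p \in p.
  move=> p pin; move/allP: Hall => /(_ p pin); case: p pin => // x q _ _.
  rewrite /=; exact: mem_last.
have U := uniq_map_f Hu Hne.
rewrite -(size_map (last x0)) -(card_uniqP U); apply: eq_card => v.
apply/idP/idP.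
- case/mapP => p pin ->; move/allP: Hall => /(_ p pin); case: p pin => // x q _ /=.
  by case/andP.
- move=> vX; move: (Hc v) => /flattenP [p pin vp]; apply/mapP; exists p => //.
  move/allP: Hall => /(_ p pin); case: p pin vp => // x q pin vp /= /andP [pq _].
  apply/eqP/negP => /negP ne; case: (path_succ pq vp ne) => z azv.
  by move: (leaf_noout z N vX); rewrite azv.
Qed.


Lemma match_sub a M M' : matching_GN a M -> M' \subset M -> matching_GN a M'.
Proof.
move=> [H1 H2] /subsetP sub; split=> [e eM|e f eM fM]; first exact: H1 (sub _ eM).
exact: H2 (sub _ eM) (sub _ fM).
Qed.

Lemma match_fst a M : matching_GN a M -> #|[set e.1 | e in M]| = #|M|.
Proof.
move=> [_ H]; apply: card_in_imset => e f eM fM /= ef.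
by apply/eqP/negP => /negP ne; case: (H e f eM fM ne); rewrite ef eqxx.
Qed.

Lemma match_snd a M : matching_GN a M -> #|[set e.2 | e in M]| = #|M|.
Proof.
move=> [_ H]; apply: card_in_imset => e f eM fM /= ef.
by apply/eqP/negP => /negP ne; case: (H e f eM fM ne); rewrite ef eqxx.
Qed.

Lemma noout_X a X M : phylo_network a X -> matching_GN a M -> #|M| = #|V| - #|X| ->
  ~: [set e.1 | e in M] = X.
Proof.
move=> N HM HMc; apply/eqP; rewrite eq_sym eqEcard; apply/andP; split.
  apply/subsetP => x xX; rewrite inE; apply/imsetP => [[e eM ex]].
  case: HM => /(_ e eM) + _; rewrite -ex => ae.
  by move: (leaf_noout e.2 N xX); rewrite ae.
have := cardsC [set e.1 | e in M]; rewrite (match_fst HM) HMc.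
have := max_card (mem X); lia.
Qed.

Lemma cover_lemma (f : seq V -> V) ps (O : {set V}) : uniq (map f ps) ->
  (forall p, p \in ps -> f p \notin O) -> size ps + #|O| = #|V| ->
  forall v, v \notin O -> v \in map f ps.
Proof.
move=> U HO Hs v vO.
have sub : [set x in map f ps] \subset ~: O.
  apply/subsetP => x; rewrite !inE => /mapP [p pin ->]; exact: HO.
have cE : #|[set x in map f ps]| = #|~: O|.
  rewrite cardsE (card_uniqP U) size_map; have := cardsC O; lia.
move/(subset_cardP cE): sub => /(_ v); rewrite !inE vO; by move=> ->.
Qed.


Definition nep a (p : seq V) := if p is x :: q then path a x q else false.

Lemma decomp a (x0 : V) n : forall M, #|M| = n -> acyclic a -> matching_GN a M -> exists ps,
 [/\ all (nep a) ps, uniq (flatten ps), (forall v, v \in flatten ps),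
     size ps + #|M| = #|V| &
     forall p, p \in ps -> forall f, f \in M -> (f.1 != last x0 p) && (f.2 != head x0 p)].
Proof.
elim: n => [|n IH] M cM ac HM.
  have -> : M = set0 by apply: cards0_eq.
  exists (map (fun v => [:: v]) (enum V)); split.
  - by apply/allP => p /mapP [v _ ->].
  - by rewrite flatten_seq1 enum_uniq.
  - by move=> v; rewrite flatten_seq1 mem_enum.
  - by rewrite size_map cards0 addn0 cardE.
  - by move=> p _ f; rewrite inE.
have : M != set0 by rewrite -card_gt0 cM.
case/set0Pn => e eM.
set M' := M :\ e.
have cM' : #|M'| = n by move: (cardsD1 e M); rewrite eM cM /M'; lia.
have HM' : matching_GN a M' by apply: match_sub HM (subsetDl _ _).
case: (IH M' cM' ac HM') => ps [Hall Hu Hc Hs Hinv].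
have Hl : forall p, p \in ps -> last x0 p \in p.
  move=> p pin; move/allP: Hall => /(_ p pin); case: p pin => // x q _ _.
  rewrite /=; exact: mem_last.
have Hh : forall p, p \in ps -> head x0 p \in p.
  move=> p pin; move/allP: Hall => /(_ p pin); case: p pin => // x q _ _.
  by rewrite /= mem_head.
have eM'f : forall f, f \in M' -> (f != e) && (f \in M) by move=> f; rewrite !inE.
have [aE HMm] := HM.
have u_in : e.1 \in map (last x0) ps.
  apply: (cover_lemma (O := [set f.1 | f in M'])).
  - exact: uniq_map_f.
  - move=> p pin; apply/imsetP => [[f fM' E]].
    by move: (Hinv p pin f fM'); rewrite E eqxx.
  - by rewrite (match_fst HM') cM' -cM'.
  - apply/imsetP => [[f fM' E]]; case/andP: (eM'f f fM') => fe fM.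
    by case: (HMm e f eM fM); [rewrite eq_sym | rewrite E eqxx].
have w_in : e.2 \in map (head x0) ps.
  apply: (cover_lemma (O := [set f.2 | f in M'])).
  - exact: uniq_map_f.
  - move=> p pin; apply/imsetP => [[f fM' E]].
    by move: (Hinv p pin f fM'); rewrite E eqxx andbF.
  - by rewrite (match_snd HM') cM' -cM'.
  - apply/imsetP => [[f fM' E]]; case/andP: (eM'f f fM') => fe fM.
    by case: (HMm e f eM fM); [rewrite eq_sym | rewrite E eqxx].
case/mapP: u_in => p1 p1in E1; case/mapP: w_in => p2 p2in E2.
have ne : p2 != p1.
  apply/eqP => E; subst p2; clear p2in.
  move/allP: Hall => /(_ p1 p1in); case: p1 p1in E1 E2 => // x1 q1 _ /= E1 E2 pth.
  have : connect a x1 (last x1 q1) by apply/connectP; exists q1.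
  by rewrite -E1 -E2 (negbTE (ac _ _ (aE e eM))).
set rest := rem p2 (rem p1 ps).
have Hperm : perm_eq ps (p1 :: p2 :: rest).
  have h1 := perm_to_rem p1in.
  have p2in' : p2 \in rem p1 ps by move: p2in; rewrite (perm_mem h1) inE (negbTE ne).
  apply: perm_trans h1 _; rewrite perm_cons; exact: perm_to_rem p2in'.
have Hflat : perm_eq (flatten ps) (flatten ((p1 ++ p2) :: rest)).
  by have := perm_flatten Hperm; rewrite /= catA.
have Hu' : uniq (p1 ++ p2 ++ flatten rest).
  by have := Hu; rewrite (perm_uniq Hflat) /= catA.
move: (Hu'); rewrite cat_uniq => /and3P [_ /hasPn D1 Hu2].
move: (Hu2); rewrite cat_uniq => /and3P [_ /hasPn D2 _].
have restin : forall p, p \in rest -> p \in ps by move=> p /mem_rem /mem_rem.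
have P1 : nep a p1 by move/allP: Hall; apply.
have P2 : nep a p2 by move/allP: Hall; apply.
have [x1 [q1 Ep1]] : exists x q, p1 = x :: q by case E: p1 P1 => [|x q] //= _; exists x, q.
have [x2 [q2 Ep2]] : exists x q, p2 = x :: q by case E: p2 P2 => [|x q] //= _; exists x, q.
subst p1 p2; rewrite /= in P1 P2.
rewrite /= in E1 E2.
have u1 : e.1 \in x1 :: q1 by rewrite E1 mem_last.
have w2 : e.2 \in x2 :: q2 by rewrite E2 mem_head.
exists ((x1 :: q1 ++ x2 :: q2) :: rest); split.
- rewrite /= cat_path P1 /= -E1 P2 -E2 aE //=.
  by apply/allP => p /restin; move/allP: Hall; apply.
- by rewrite -(perm_uniq Hflat).
- by move=> v; rewrite -(perm_mem Hflat).
- rewrite /= (cardsD1 e M) eM.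
  by move: Hs; rewrite (perm_size Hperm) /= -/M' => <-; rewrite add1n addnS !addSn.
- move=> p; rewrite inE => /orP [/eqP -> | pin] f fM.
  + rewrite /= last_cat /=.
    case fe: (f == e).
    * move/eqP: fe => ->; apply/andP; split.
      - apply/negP => /eqP E.
        have : last x2 q2 \in (x2 :: q2) ++ flatten rest by rewrite mem_cat mem_last.
        by move/D1; rewrite -E u1.
      - apply/negP => /eqP E.
        have : e.2 \in (x2 :: q2) ++ flatten rest by rewrite mem_cat w2.
        by move/D1; rewrite E mem_head.
    * have fM' : f \in M' by rewrite !inE fe.
      move: (Hinv _ p2in f fM') (Hinv _ p1in f fM') => /= /andP [-> _] /andP [_ ->] //.
  + case fe: (f == e).
    * move/eqP: fe => ->.
      have pin' := restin _ pin.
      have lin : last x0 p \in flatten rest by apply/flattenP; exists p => //; exact: Hl.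
      have hin : head x0 p \in flatten rest by apply/flattenP; exists p => //; exact: Hh.
      apply/andP; split.
      - apply/negP => /eqP E.
        have : last x0 p \in (x2 :: q2) ++ flatten rest by rewrite mem_cat lin orbT.
        by move/D1; rewrite -E u1.
      - apply/negP => /eqP E.
        by move: (D2 _ hin); rewrite -E w2.
    * have fM' : f \in M' by rewrite !inE fe.
      exact: Hinv _ (restin _ pin) f fM'.
Qed.


Lemma path_match1 a x q : path a x q -> uniq (x :: q) -> exists M,
  [/\ matching_GN a M, #|M| = size q & forall e, e \in M -> (e.1 \in x :: q) && (e.2 \in q)].
Proof.
elim: q x => [|y q IH] x.
  move=> _ _; exists set0; split; last by move=> e; rewrite inE.
  - by split=> e; rewrite inE.
  - by rewrite cards0.
rewrite /= => /andP [axy pq] /andP [xn uq].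
case: (IH y pq uq) => M' [[aM' mM'] cM' inM'].
have xyn : (x, y) \notin M'.
  by apply/negP => /inM' /andP [/= xin _]; rewrite xin in xn.
exists ((x, y) |: M'); split.
- split.
  + move=> e; rewrite !inE => /orP [/eqP -> // | eM]; exact: aM'.
  + have key : forall f, f \in M' -> (x != f.1) && (y != f.2).
      move=> f /inM' /andP [f1 f2]; apply/andP; split.
      * by apply/eqP => E; rewrite E f1 in xn.
      * apply/eqP => E; move: uq; rewrite /= E f2 //.
    move=> e f; rewrite !inE => /orP [/eqP -> | eM] /orP [/eqP -> | fM] ne.
    * by rewrite eqxx in ne.
    * by case/andP: (key f fM) => /= -> ->.
    * by case/andP: (key e eM) => /= h1 h2; rewrite eq_sym h1 eq_sym h2.
    * exact: mM'.
- by rewrite cardsU1 xyn cM'.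
- move=> e; rewrite !inE => /orP [/eqP -> | eM] /=.
    by rewrite !eqxx.
  case/andP: (inM' e eM) => h1 h2; move: h1; rewrite inE => /orP [-> | ->];
  by rewrite ?orbT h2 orbT.
Qed.

Lemma paths_match a ps : all (nep a) ps -> uniq (flatten ps) -> exists M,
  [/\ matching_GN a M, #|M| + size ps = size (flatten ps) &
      forall e, e \in M -> (e.1 \in flatten ps) && (e.2 \in flatten ps)].
Proof.
elim: ps => [|p ps IH].
  move=> _ _; exists set0; split; last by move=> e; rewrite inE.
  - by split=> e; rewrite inE.
  - by rewrite cards0.
case: p => [|x q] // /andP [pq Hall] Hu.
have : uniq ((x :: q) ++ flatten ps) by [].
rewrite cat_uniq => /and3P [uq /hasPn D uf].
case: (path_match1 pq uq) => M1 [[aM1 mM1] cM1 in1].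
case: (IH Hall uf) => M2 [[aM2 mM2] cM2 in2].
have key : forall e f, e \in M1 -> f \in M2 -> (e.1 != f.1) && (e.2 != f.2).
  move=> e f eM fM; case/andP: (in1 e eM) => e1 e2; case/andP: (in2 f fM) => f1 f2.
  apply/andP; split; apply/eqP => E.
  - by move: (D _ f1); rewrite -E e1.
  - by move: (D _ f2); rewrite -E inE e2 orbT.
have -> : flatten ((x :: q) :: ps) = (x :: q) ++ flatten ps by [].
exists (M1 :|: M2); split.
- split.
  + move=> e; rewrite inE => /orP [] ?; [exact: aM1 | exact: aM2].
  + move=> e f; rewrite !inE => /orP [eM | eM] /orP [fM | fM] ne.
    * exact: mM1.
    * by case/andP: (key e f eM fM) => -> ->.
    * by case/andP: (key f e fM eM); rewrite eq_sym => -> /=; rewrite eq_sym.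
    * exact: mM2.
- have -> : #|M1 :|: M2| = #|M1| + #|M2|.
    rewrite cardsU; suff -> : M1 :&: M2 = set0 by rewrite cards0 subn0.
    apply/setP => e; rewrite !inE; apply/negP => /andP [e1 e2].
    by case/andP: (key e e e1 e2); rewrite eqxx.
  by rewrite size_cat /= cM1 -cM2 addnS addSn addnA.
- move=> e; rewrite inE => /orP [eM | eM].
    by case/andP: (in1 e eM) => h1 h; rewrite !mem_cat h1 inE h !orbT.
  by case/andP: (in2 e eM); rewrite !mem_cat => -> ->; rewrite !orbT.
Qed.


Lemma iv_v a X : phylo_network a X -> cond_iv a X -> cond_v a X.
Proof.
move=> N [ps [Hall [Hu Hc]]].
have [x0 _] : exists x, x \in X by case: (N) => /set0Pn [x xX] _; exists x.
have Hall' : all (nep a) ps.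
  by apply/allP => p /(allP Hall); case: p => // x q /= /andP [].
case: (paths_match Hall' Hu) => M [HM cM _].
exists M; split => //.
have sV : size (flatten ps) = #|V|.
  by rewrite -(card_uniqP Hu); apply: eq_card => v; rewrite Hc.
have := iv_size x0 N Hall Hu Hc.
move: cM; rewrite sV => <- ->; by rewrite addnK.
Qed.

Lemma iv_ii a X : phylo_network a X -> cond_iv a X -> cond_ii a X.
Proof.
move=> N [ps [Hall [Hu Hc]]].
have [x0 _] : exists x, x \in X by case: (N) => /set0Pn [x xX] _; exists x.
exists X, ps; split; last by split; [exact: iv_size x0 N Hall Hu Hc | ].
move=> u v uX vX ne; apply/negP => /(leaf_connect N uX) E.
by rewrite E eqxx in ne.
Qed.

Lemma ii_iii a X : cond_ii a X -> cond_iii a X.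
Proof.
move=> [S [ps [_ [_ [Hall [Hu Hc]]]]]] U; exists ps; do 2 split => //; move=> u _.
by rewrite count_in // Hc.
Qed.

Lemma iii_iv a X : cond_iii a X -> cond_iv a X.
Proof.
move=> H; case: (H [set: V]) => ps [Hall [Hu Hc]]; exists ps; do 2 split => //; move=> v.
have := Hc v (in_setT v); rewrite count_in //; by case: (v \in flatten ps).
Qed.

Lemma tb_v a X : phylo_network a X -> tree_based a X -> cond_v a X.
Proof.
move=> N [r [t [_ [ta [tr0 [t1 [_ tl]]]]]]].
pose child v := odflt v [pick w | t v w].
have hc : forall v, v \notin X -> t v (child v).
  move=> v vX; rewrite /child; case: pickP => [w // | H].
  have : outdeg t v = 0.
    by apply/eqP; rewrite cards_eq0; apply/eqP/setP => w; rewrite !inE H.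
  by move/tl; rewrite (negbTE vX).
exists [set (v, child v) | v in ~: X]; split.
- split.
  + move=> e /imsetP [v vX ->] /=; apply: ta; apply: hc; by rewrite inE in vX.
  + move=> e f /imsetP [v vX ->] /imsetP [w wX ->] ne /=.
    have vw : v != w by apply: contraNneq ne => ->.
    split => //; apply/eqP => E.
    rewrite inE in vX; rewrite inE in wX.
    have tv := hc v vX; have tw := hc w wX; rewrite E in tv.
    have cr : child w != r.
      apply/eqP => cE; move/eqP: tr0; rewrite cards_eq0 => /eqP S.
      have : w \in [set u | t u r] by rewrite inE -cE.
      by rewrite S inE.
    have : #|[set u | t u (child w)]| <= 1 by have := t1 _ cr; rewrite /indeg => ->.
    move/card_le1_eqP => H; have : v = w by apply: H; rewrite inE.
    by move/eqP; rewrite (negbTE vw).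
- rewrite card_in_imset; last by move=> v w _ _ [].
  by rewrite (cardsCs (~: X)) setCK.
Qed.


Lemma v_tb a X : phylo_network a X -> cond_v a X -> tree_based a X.
Proof.
move=> N [M [HM cM]].
have OX := noout_X N HM cM.
case: (N) => _ [ac [[HX H1] | [r [hr0 [hpos _]]]]].
  have /cards1P [r Er] : #|X| == 1 by rewrite H1.
  have allr : forall v, v = r by move=> v; apply/set1P; rewrite -Er HX inE.
  exists r, [rel u v | false]; split.
    apply/eqP; rewrite cards_eq0; apply/eqP/setP => u; rewrite !inE.
    apply/negP => aur; move: (ac _ _ aur); by rewrite (allr u) connect0.
  split=> //; split.
    by apply/eqP; rewrite cards_eq0; apply/eqP/setP => u; rewrite !inE.
  split; first by move=> v; rewrite (allr v) eqxx.
  split; first by move=> v; rewrite (allr v) connect0.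
  by move=> v _; rewrite HX inE.
pose parent v := if [pick u | (u, v) \in M] is Some u then u else odflt v [pick u | a u v].
have hpa : forall v, v != r -> a (parent v) v.
  move=> v vr; rewrite /parent; case: pickP => [u uM | _].
    by case: HM => H _; exact: (H _ uM).
  case: pickP => [u // | H].
  by move: (hpos v vr); rewrite /indeg card_gt0 => /set0Pn [u]; rewrite inE H.
exists r, [rel u v | (v != r) && (parent v == u)]; split => //.
split; first by move=> u v /andP [vr /eqP <-]; exact: hpa.
split.
  by apply/eqP; rewrite cards_eq0; apply/eqP/setP => u; rewrite !inE /= eqxx.
split.
  move=> v vr; rewrite /indeg.
  have -> : [set u | (v != r) && (parent v == u)] = [set parent v].
    by apply/setP => u; rewrite !inE /= vr eq_sym.
  exact: cards1.
split.
  have key : forall n v, #|[set u | connect a u v]| <= n ->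
      connect [rel u v | (v != r) && (parent v == u)] r v.
    elim=> [|n IH] v hn.
      have : 0 < #|[set u | connect a u v]| by apply/card_gt0P; exists v; rewrite inE connect0.
      by rewrite ltnNge hn.
    case: (eqVneq v r) => [-> | vr]; first exact: connect0.
    apply: (connect_trans (y := parent v)); last by apply: connect1; rewrite /= vr eqxx.
    apply: IH; rewrite -ltnS; apply: leq_trans hn; apply: proper_card.
    apply/properP; split.
      apply/subsetP => u; rewrite !inE => h.
      apply: connect_trans h _; apply: connect1; exact: hpa.
    exists v; first by rewrite inE connect0.
    by rewrite inE; apply: ac; exact: hpa.
  by move=> v; apply: key; exact: max_card.
move=> v h0; apply/negPn/negP => vX.
have : v \in [set e.1 | e in M] by move: vX; rewrite -OX inE negbK.
case/imsetP => [[v' w] eM /= ev]; subst v'.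
have avw : a v w by case: HM => H _; exact: (H _ eM).
have wr : w != r.
  apply/eqP => E; move/eqP: hr0; rewrite cards_eq0 => /eqP S.
  have : v \in [set u | a u r] by rewrite inE -E.
  by rewrite S inE.
have pw : parent w = v.
  rewrite /parent; case: pickP => [u uM | H]; last by rewrite H in eM.
  case: (eqVneq (u, w) (v, w)) => [[] // | ne].
  by case: HM => _ /(_ _ _ uM eM ne) [_]; rewrite eqxx.
move/eqP: h0; rewrite cards_eq0 => /eqP S.
have : w \in [set x | (x != r) && (parent x == v)] by rewrite inE wr pw eqxx.
by rewrite S inE.
Qed.

End Main.

Theorem theorem3 (V : finType) (a : rel V) (X : {set V}) :
  phylo_network a X ->
  [<-> tree_based a X; cond_ii a X; cond_iii a X; cond_iv a X; cond_v a X].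
Proof.
move=> N; tfae.
- move=> H; apply: (iv_ii N).
  have [x0 _] : exists x, x \in X by case: (N) => /set0Pn [x xX] _; exists x.
  have [ac _] : acyclic a /\ True by case: N => _ [ac _].
  case: (tb_v N H) => M [HM cM].
  case: (decomp x0 (erefl #|M|) ac HM) => ps [Hall Hu Hc Hs Hinv].
  have OX := noout_X N HM cM.
  exists ps; split => //.
  apply/allP => p pin; move/allP: Hall => /(_ p pin).
  case: p pin => // x q pin /= pth; rewrite pth /=.
  rewrite -OX inE; apply/imsetP => [[f fM E]].
  by move: (Hinv _ pin f fM) => /andP [] /=; rewrite -E eqxx.
- exact: ii_iii.
- exact: iii_iv.
- exact: iv_v N.
- exact: v_tb N.
Qed.
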